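(* Fix $i\in I$. Let $a\in U_-[f_i^{-1}]^{\mathrm{pa}}$. If $\phi_{\lambda+\rho}(a)\in U_-$ for all $\lambda\in P_+$, then $a\in U_-^{\mathrm{pa}}$.
   Context: Let $[a_{ij}]_{i,j\in I}$ be a symmetrizable generalized Cartan matrix ($a_{ii}=2$, $a_{ij}\le0$ for $i\ne j$, $a_{ij}=0\iff a_{ji}=0$, $d_ia_{ij}=d_ja_{ji}$, $d_i\in\mathbb{Z}_{>0}$). $Q^\vee$ is a free $\mathbb{Z}$-module, $P=\mathrm{Hom}(Q^\vee,\mathbb{Z})$, $\alpha_i^\vee\in Q^\vee$ linearly independent, $\alpha_i\in P$ pairwise distinct and linearly independent with $\langle\alpha_i^\vee,\alpha_j\rangle=a_{ij}$, $\Lambda_i\in P$ with $\langle\alpha_i^\vee,\Lambda_j\rangle=\delta_{ij}$, $\rho=\sum_i\Lambda_i$, $P_+=\{\lambda:\langle\alpha_i^\vee,\lambda\rangle\ge0\ \forall i\}$. Kac–Moody case: $U_-=U(\mathfrak{n}_-)$, the $\mathbb{C}$-algebra generated by $f_i$ with Serre relations $\sum_{k=0}^{1-a_{ij}}(-1)^kf_i^{(1-a_{ij}-k)}f_jf_i^{(k)}=0$ ($i\ne j$), $f_i^{(k)}=f_i^k/k!$. $q$-difference case: $U_-=U_q(\mathfrak{n}_-)$ over $\mathbb{C}(q)$ with $f_i^{(k)}=f_i^k/[k]_{q_i}!$, $q_i=q^{d_i}$, $[a]_q=(q^a-q^{-a})/(q-q^{-1})$. $U_-[f_i^{-1}]$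 is the Ore localization of $U_-$ at the powers of the single $f_i$. $U_-[f_i^{-1}]^{\mathrm{pa}}$ is $U_-[f_i^{-1}][\beta\mid\beta\in Q^\vee]$ (polynomial ring in a basis of $Q^\vee$, central variables) in the Kac–Moody case and the central Laurent extension $U_-[f_i^{-1}][q^\beta\mid\beta\in Q^\vee]$, $q^\beta q^\gamma=q^{\beta+\gamma}$, in the $q$-case; $U_-^{\mathrm{pa}}$ is defined likewise over $U_-$. For $\lambda\in P$, $\phi_\lambda:U_-[f_i^{-1}]^{\mathrm{pa}}\to U_-[f_i^{-1}]$ is the algebra homomorphism fixing $U_-[f_i^{-1}]$ and sending $\beta\mapsto\langle\beta,\lambda\rangle$ (resp. $q^\beta\mapsto q^{\langle\beta,\lambda\rangle}$). *)

(* Defs.v *)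
From HB Require Import structures.
From mathcomp Require Import all_boot all_order all_algebra.
From mathcomp Require Import finmap fraction.
From mathcomp Require mpoly.
From mathcomp Require Import Rstruct.
From mathcomp Require Import complex.
Set Implicit Arguments. Unset Strict Implicit. Unset Printing Implicit Defensive.
Import Order.TTheory GRing.Theory Num.Theory.
Local Open Scope ring_scope.

Definition Cfield : fieldType := (Rdefinitions.R)[i].
Definition Cq : fieldType := {fraction {poly Cfield}}.
Definition qq : Cq := @FracField.tofrac _ ('X : {poly Cfield}).

Definition is_GCM (n : nat) (A : 'M[int]_n) : Prop :=
  [/\ forall i, A i i = 2,
      forall i j, i != j -> A i j <= 0 &
      forall i j, (A i j == 0) = (A j i == 0)].

Definition symmetrizer (n : nat) (A : 'M[int]_n) (d : 'I_n -> nat) : Prop :=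
  (forall i, (0 < d i)%N) /\ (forall i j, (d i)%:Z * A i j = (d j)%:Z * A j i).

(* Q^vee = Z^r (row vectors), P = Hom(Q^vee, Z) identified with Z^r via the
   dual basis, so that the pairing <beta, lambda> is the dot product.    *)
Definition pairing (r : nat) (x y : 'rV[int]_r) : int :=
  \sum_(k < r) x 0 k * y 0 k.

Definition lin_indep (n r : nat) (v : 'I_n -> 'rV[int]_r) : Prop :=
  forall c : 'I_n -> int, \sum_(i < n) c i *: v i = 0 -> forall i, c i = 0.

Definition realization (n r : nat) (A : 'M[int]_n)
    (av al Lam : 'I_n -> 'rV[int]_r) : Prop :=
  [/\ lin_indep av, lin_indep al, injective al,
      forall i j, pairing (av i) (al j) = A i j &
      forall i j, pairing (av i) (Lam j) = (i == j)%:Z].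

Definition rho (n r : nat) (Lam : 'I_n -> 'rV[int]_r) : 'rV[int]_r :=
  \sum_(i < n) Lam i.

Definition dominant (n r : nat) (av : 'I_n -> 'rV[int]_r) (lam : 'rV[int]_r)
  : Prop := forall i, 0 <= pairing (av i) lam.

Definition serre_rel (K : fieldType) (U : algType K) (n : nat)
    (A : 'M[int]_n) (fct : 'I_n -> nat -> K) (f : 'I_n -> U) : Prop :=
  forall i j, i != j ->
    let N := absz (1 - A i j) in
    let dp k := (fct i k)^-1 *: f i ^+ k in
    \sum_(k < N.+1) (-1) ^+ k *: (dp (N - k)%N * f j * dp k) = 0.

Definition alg_hom (K : fieldType) (U B : algType K) (h : U -> B) : Prop :=
  [/\ forall x y, h (x + y) = h x + h y,
      forall (c : K) x, h (c *: x) = c *: h x,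
      forall x y, h (x * y) = h x * h y & h 1 = 1].

Definition presented_by_serre (K : fieldType) (U : algType K) (n : nat)
    (A : 'M[int]_n) (fct : 'I_n -> nat -> K) (f : 'I_n -> U) : Prop :=
  serre_rel A fct f /\
  forall (B : algType K) (g : 'I_n -> B), serre_rel A fct g ->
    (exists h : U -> B, alg_hom h /\ forall i, h (f i) = g i) /\
    (forall h1 h2 : U -> B, alg_hom h1 -> alg_hom h2 ->
       (forall i, h1 (f i) = g i) -> (forall i, h2 (f i) = g i) -> h1 =1 h2).

Definition fct_KM (n : nat) (i : 'I_n) (k : nat) : Cfield := (k`!)%:R.

Definition qint (x : Cq) (a : nat) : Cq := (x ^+ a - x ^- a) / (x - x^-1).
Definition qfact (x : Cq) (k : nat) : Cq := \prod_(1 <= a < k.+1) qint x a.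
Definition fct_q (n : nat) (d : 'I_n -> nat) (i : 'I_n) (k : nat) : Cq :=
  qfact (qq ^+ d i) k.

(* (L, iota) is the Ore localization U[f_i^{-1}] of U at the powers of f_i,
   i.e. the (left) ring of fractions with respect to S = {f_i^N}:
   iota(f_i) is invertible, every element is iota(f_i)^{-N} iota(u),
   and ker iota = {u | f_i^N u = 0 for some N}. *)
Definition ore_localization_at (K : fieldType) (U L : algType K)
    (x : U) (iota : U -> L) : Prop :=
  [/\ alg_hom iota,
      exists y : L, y * iota x = 1 /\ iota x * y = 1,
      forall z : L, exists (N : nat) (u : U), iota x ^+ N * z = iota u &
      forall u : U, iota u = 0 -> exists N : nat, x ^+ N * u = 0].

Definition in_image (U L : Type) (iota : U -> L) (z : L) : Prop :=
  exists u : U, z = iota u.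

(* Kac--Moody "pa": R[beta | beta in Q^vee] = polynomial ring over R in the
   standard basis e_1..e_r of Q^vee (central variables).  phi_lambda sends
   e_k to <e_k, lambda> = lambda_k. *)
Definition phi_KM (L : algType Cfield) (r : nat) (lam : 'rV[int]_r)
    (a : mpoly.mpoly r L) : L :=
  mpoly.meval (fun k : 'I_r => (lam 0 k)%:~R) a.

(* q "pa": R[q^beta | beta in Q^vee] (group algebra of Q^vee over R with
   central q^beta); as an R-module its elements are the finitely supported
   functions Q^vee -> R (beta |-> coefficient of q^beta).
   phi_lambda sends q^beta to q^<beta,lambda>. *)
Definition pa_q (L : algType Cq) (r : nat) :=
  {fsfun 'rV[int]_r -> L with 0}.

Definition phi_q (L : algType Cq) (r : nat) (lam : 'rV[int]_r)
    (a : pa_q L r) : L :=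
  \sum_(beta <- finsupp a) (qq ^ pairing beta lam) *: a beta.

(* Main.v *)
Require Import Defs.
From HB Require Import structures.
From mathcomp Require Import all_boot all_order all_algebra.
From mathcomp Require Import finmap fraction.
From mathcomp Require mpoly.
From mathcomp Require Import Rstruct complex.
From mathcomp Require Import zify ring.
From Stdlib Require Import Classical.
Set Implicit Arguments. Unset Strict Implicit. Unset Printing Implicit Defensive.
Import Order.TTheory GRing.Theory Num.Theory.
Local Open Scope ring_scope.


Definition subsp (K : fieldType) (W : lmodType K) (V : W -> Prop) :=
  [/\ V 0, forall x y, V x -> V y -> V (x + y) & forall c x, V x -> V (c *: x)].

Lemma subspB (K : fieldType) (W : lmodType K) (V : W -> Prop) :
  subsp V -> forall x y, V x -> V y -> V (x - y).
Proof.
case=> _ VD VZ x y Vx Vy; apply: VD => //.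
by rewrite -scaleN1r; apply: VZ.
Qed.

Lemma subsp_sum (K : fieldType) (W : lmodType K) (V : W -> Prop) (T : eqType)
  (s : seq T) (F : T -> W) : subsp V -> (forall t, t \in s -> V (F t)) ->
  V (\sum_(t <- s) F t).
Proof.
case=> V0 VD VZ H; elim: s H => [|t s IH] H; first by rewrite big_nil.
rewrite big_cons; apply: VD; first by apply: H; rewrite inE eqxx.
by apply: IH => u us; apply: H; rewrite inE us orbT.
Qed.

Lemma elim_lin (K : fieldType) (W : lmodType K) (V : W -> Prop)
  (HV : subsp V) (T : eqType) (X : Type) (P : X -> Prop)
  (s : seq T) (g : T -> X -> K) (a : T -> W) :
  uniq s ->
  (forall c : T -> K, (forall x, P x -> \sum_(t <- s) c t * g t x = 0) ->
     forall t, t \in s -> c t = 0) ->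
  (forall x, P x -> V (\sum_(t <- s) g t x *: a t)) ->
  forall t, t \in s -> V (a t).
Proof.
elim: s g => [|t0 s IH] g; first by [].
rewrite cons_uniq => /andP[t0s us] Hind HY.
have [x0 [Px0 gx0]] : exists x0, P x0 /\ g t0 x0 != 0.
  apply: NNPP => Hn.
  have H1 : forall x, P x -> g t0 x = 0.
    move=> x Px; apply: NNPP => gx; apply: Hn; exists x; split=> //; exact/eqP.
  have := Hind (fun t => (t == t0)%:R) _ t0; rewrite inE eqxx /= => H.
  suff: (1 : K) = 0 by move/eqP; rewrite oner_eq0.
  apply: H => // x Px; rewrite big_cons eqxx mul1r H1 // add0r big_seq big1 //.
  move=> t ts; have: t != t0 by apply: contraNneq t0s => <-.
  by move/negbTE => ->; rewrite mul0r.
pose h t x := g t0 x0 * g t x - g t x0 * g t0 x.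
have Vs : forall t, t \in s -> V (a t).
  apply: (IH h us).
    move=> c Hc t ts.
    pose c' t := if t == t0 then - \sum_(u <- s) c u * g u x0 else c t * g t0 x0.
    have := Hind c' _ t; rewrite inE ts orbT /c'.
    have -> : (t == t0) = false by apply/negbTE; apply: contraNneq t0s => <-.
    move=> H; apply/eqP; rewrite -(mulIr_eq0 _ (mulIf gx0)) H // => x Px.
    rewrite big_cons eqxx.
    have -> : \sum_(u <- s) (if u == t0 then - \sum_(u0 <- s) c u0 * g u0 x0 else c u * g t0 x0) * g u x = \sum_(u <- s) g t0 x0 * (c u * g u x).
      rewrite !big_seq; apply: eq_bigr => u us'.
      have -> : (u == t0) = false by apply/negbTE; apply: contraNneq t0s => <-.
      by rewrite mulrAC mulrC.
    rewrite -mulr_sumr.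
    have E : \sum_(u <- s) c u * h u x =
       g t0 x0 * (\sum_(u <- s) c u * g u x) - (\sum_(u <- s) c u * g u x0) * g t0 x.
      rewrite mulr_sumr mulr_suml -sumrB; apply: eq_bigr => u _; rewrite /h; ring.
    by rewrite addrC mulNr -E Hc.
  move=> x Px.
  have -> : \sum_(t <- s) h t x *: a t =
     g t0 x0 *: (\sum_(t <- t0 :: s) g t x *: a t)
     - g t0 x *: (\sum_(t <- t0 :: s) g t x0 *: a t).
    rewrite !big_cons !scalerDr !scalerA (mulrC (g t0 x)) opprD addrACA subrr add0r.
    rewrite !scaler_sumr -sumrB; apply: eq_bigr => t _.
    by rewrite !scalerA -scalerBl /h (mulrC (g t0 x)).
  case: (HV) => _ _ VZ; by apply: subspB => //; apply: VZ; apply: HY.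
move=> t; rewrite inE => /orP[/eqP ->|]; last exact: Vs.
have -> : a t0 = (g t0 x0)^-1 *: ((\sum_(t <- t0 :: s) g t x0 *: a t)
                 - \sum_(t <- s) g t x0 *: a t).
  by rewrite big_cons addrK scalerA mulVf // scale1r.
case: (HV) => V0 VD VZ; apply: (VZ); apply: subspB => //; first exact: (HY x0 Px0).
apply: subsp_sum => // t1 ts; apply: (VZ); exact: Vs.
Qed.
Lemma elim_char (K : fieldType) (W : lmodType K) (V : W -> Prop)
  (HV : subsp V) (T : eqType) (X : nmodType) (P : X -> Prop)
  (s : seq T) (chi : T -> X -> K) (a : T -> W) :
  P 0 -> (forall x y, P x -> P y -> P (x + y)) ->
  (forall t x y, chi t (x + y) = chi t x * chi t y) -> (forall t, chi t 0 = 1) ->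
  uniq s ->
  (forall t t', t \in s -> t' \in s -> t != t' -> exists x, P x /\ chi t x != chi t' x) ->
  (forall x, P x -> V (\sum_(t <- s) chi t x *: a t)) ->
  forall t, t \in s -> V (a t).
Proof.
move=> P0 PD chiD chi0.
elim: s a => [|t0 s IH] a; first by [].
rewrite cons_uniq => /andP[t0s us] Hd HY.
have Vs : forall t, t \in s -> V (a t).
  move=> t1 t1s.
  have t10 : t1 != t0 by apply: contraNneq t0s => <-.
  have [x0 [Px0 hx0]] : exists x, P x /\ chi t1 x != chi t0 x by apply: Hd => //; rewrite inE ?t1s ?eqxx ?orbT.
  pose b t := (chi t x0 - chi t0 x0) *: a t.
  have : V (b t1).
    apply: (IH b us) => //.
      by move=> t t' ts t's; apply: Hd; rewrite inE ?ts ?t's orbT.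
    move=> x Px.
    have -> : \sum_(t <- s) chi t x *: b t =
      (\sum_(t <- t0 :: s) chi t (x + x0) *: a t)
      - chi t0 x0 *: (\sum_(t <- t0 :: s) chi t x *: a t).
      rewrite !big_cons chiD scalerDr !scalerA opprD addrACA (mulrC (chi t0 x0)) subrr add0r.
      rewrite scaler_sumr -sumrB; apply: eq_bigr => t _.
      by rewrite /b chiD !scalerA -scalerBl mulrBr mulrC (mulrC (chi t0 x0)).
    apply: subspB => //; last by case: (HV) => _ _ VZ; apply: (VZ); apply: (HY x).
    by apply: (HY (x + x0)); apply: PD.
  have nz : chi t1 x0 - chi t0 x0 != 0 by rewrite subr_eq0.
  case: (HV) => _ _ VZ Vb.
  have -> : a t1 = (chi t1 x0 - chi t0 x0)^-1 *: b t1 by rewrite /b scalerA mulVf // scale1r.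
  exact: VZ.
move=> t; rewrite inE => /orP[/eqP ->|]; last exact: Vs.
have -> : a t0 = (\sum_(t <- t0 :: s) chi t 0 *: a t) - \sum_(t <- s) chi t 0 *: a t.
  by rewrite big_cons addrK chi0 scale1r.
case: (HV) => V0 VD VZ; apply: subspB => //; first exact: (HY 0 P0).
apply: subsp_sum => // t1 ts; apply: (VZ); exact: Vs.
Qed.



Lemma pairingDr r (x y z : 'rV[int]_r) : pairing x (y + z) = pairing x y + pairing x z.
Proof. by rewrite /pairing -big_split; apply: eq_bigr => k _; rewrite mxE mulrDr. Qed.
Lemma pairingDl r (x y z : 'rV[int]_r) : pairing (y + z) x = pairing y x + pairing z x.
Proof. by rewrite /pairing -big_split; apply: eq_bigr => k _; rewrite mxE mulrDl. Qed.
Lemma pairingNl r (x y : 'rV[int]_r) : pairing (- y) x = - pairing y x.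
Proof. by rewrite /pairing -sumrN; apply: eq_bigr => k _; rewrite mxE mulNr. Qed.
Lemma pairingZr r (x y : 'rV[int]_r) c : pairing x (c *: y) = c * pairing x y.
Proof. by rewrite /pairing mulr_sumr; apply: eq_bigr => k _; rewrite mxE mulrCA. Qed.
Lemma pairing0r r (x : 'rV[int]_r) : pairing x 0 = 0.
Proof. by rewrite /pairing big1 // => k _; rewrite mxE mulr0. Qed.
Lemma pairing_sumr r (x : 'rV[int]_r) n (F : 'I_n -> 'rV[int]_r) :
  pairing x (\sum_(i < n) F i) = \sum_(i < n) pairing x (F i).
Proof.
elim/big_rec2: _ => [|j y1 y2 _ <-]; first exact: pairing0r.
by rewrite pairingDr.
Qed.

Lemma pairing_rho n r (A : 'M[int]_n) (av al Lam : 'I_n -> 'rV[int]_r) :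
  realization A av al Lam -> forall i, pairing (av i) (rho Lam) = 1.
Proof.
case=> _ _ _ _ HL i; rewrite /rho pairing_sumr.
under eq_bigr do rewrite HL.
by rewrite (bigD1 i) //= eqxx big1 ?addr0 // => j /negbTE; rewrite eq_sym => ->.
Qed.

(* shifting by a large multiple of rho makes things dominant *)
Definition shiftc n r (av : 'I_n -> 'rV[int]_r) (y : 'rV[int]_r) : nat :=
  \sum_(i < n) absz (pairing (av i) y).

Lemma dominant_shift n r (A : 'M[int]_n) (av al Lam : 'I_n -> 'rV[int]_r) :
  realization A av al Lam -> forall (y : 'rV[int]_r) (k : nat),
  dominant av (y + ((shiftc av y + k)%:Z) *: rho Lam).
Proof.
move=> Hre y k i; rewrite pairingDr pairingZr (pairing_rho Hre) mulr1.
have : (absz (pairing (av i) y) <= shiftc av y)%N.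
  by rewrite /shiftc (bigD1 i) //= leq_addr.
lia.
Qed.

Lemma qq_neq0 : qq != 0.
Proof. by rewrite /qq tofrac_eq0 polyX_eq0. Qed.

Lemma qqX_eq1 (k : int) : qq ^ k = 1 -> k = 0.
Proof.
have H m : qq ^+ m = 1 -> m = 0%N.
  rewrite /qq -rmorphXn -(rmorph1 (@tofrac _)) => /eqP; rewrite tofrac_eq => /eqP E.
  by have := size_polyXn Cfield m; rewrite E size_poly1 => -[].
case: k => m /=; first by move/H => ->.
by rewrite NegzE -exprnN => /eqP; rewrite invr_eq1 => /eqP /H.
Qed.

Lemma exists_dom n r (A : 'M[int]_n) (av al Lam : 'I_n -> 'rV[int]_r) :
  realization A av al Lam -> forall g : 'rV[int]_r, g != 0 ->
  exists lam, dominant av lam /\ pairing g lam != 0.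
Proof.
move=> Hre g g0.
have [j gj] : exists j, g 0 j != 0.
  apply: NNPP => Hn; move/eqP: g0; apply; apply/rowP => j; rewrite mxE.
  by apply: NNPP => gj; apply: Hn; exists j; apply/eqP.
pose e : 'rV[int]_r := delta_mx 0 j.
have pe : pairing g e = g 0 j.
  rewrite /pairing (bigD1 j) //= big1 ?addr0; first by rewrite mxE !eqxx mulr1.
  by move=> k /negbTE kj; rewrite mxE kj mulr0.
pose l1 : 'rV[int]_r := (shiftc av e)%:Z *: rho Lam.
have d1 : dominant av l1.
  by move=> i; rewrite /l1 pairingZr (pairing_rho Hre) mulr1.
have d2 := dominant_shift Hre e 0; rewrite addn0 in d2.
case: (boolP (pairing g l1 == 0)) => [/eqP p1|p1]; last by exists l1.
exists (e + l1); split=> //.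
by rewrite pairingDr p1 addr0 pe.
Qed.

Lemma img_subsp (K : fieldType) (U L : algType K) (iota : U -> L) :
  alg_hom iota -> subsp (in_image iota).
Proof.
case=> HD HZ _ _.
have i0 : iota 0 = 0.
  have h := HD 0 0; rewrite addr0 in h; by apply: (addrI (iota 0)); rewrite -h addr0.
split.
- by exists 0.
- by move=> x y [u ->] [v ->]; exists (u + v); rewrite HD.
- by move=> c x [u ->]; exists (c *: u); rewrite HZ.
Qed.

Lemma dominant0 n r (av : 'I_n -> 'rV[int]_r) : dominant av 0.
Proof. by move=> i; rewrite pairing0r. Qed.

Lemma dominantD n r (av : 'I_n -> 'rV[int]_r) x y :
  dominant av x -> dominant av y -> dominant av (x + y).
Proof. by move=> hx hy i; rewrite pairingDr addr_ge0. Qed.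

Lemma q_case n r (A : 'M[int]_n) (av al Lam : 'I_n -> 'rV[int]_r)
  (Hre : realization A av al Lam) (U L : algType Cq) (iota : U -> L)
  (Hi : alg_hom iota) (a : pa_q L r) :
  (forall lam : 'rV[int]_r, dominant av lam ->
          in_image iota (phi_q (lam + rho Lam) a)) ->
  forall beta : 'rV[int]_r, in_image iota (a beta).
Proof.
move=> Hphi beta.
have HV := img_subsp Hi.
case: (boolP (beta \in finsupp a)) => bs; last first.
  by rewrite fsfun_dflt //; case: HV.
pose chi (t x : 'rV[int]_r) := qq ^ pairing t x.
pose a' t := qq ^ pairing t (rho Lam) *: a t.
have E := @elim_char Cq L (in_image iota) HV ('rV[int]_r) ('rV[int]_r) (dominant av)
  (enum_fset (finsupp a)) chi a' (dominant0 av) (@dominantD _ _ av).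
have qn := qq_neq0.
have chiD : forall t x y, chi t (x + y) = chi t x * chi t y.
  by move=> t x y; rewrite /chi pairingDr expfzDr.
have chi0 : forall t, chi t 0 = 1 by move=> t; rewrite /chi pairing0r expr0z.
have {}E := E chiD chi0 (fset_uniq _).
have Hd : forall t t', t \in enum_fset (finsupp a) -> t' \in enum_fset (finsupp a) -> t != t' ->
    exists x, dominant av x /\ chi t x != chi t' x.
  move=> t t' _ _ tt.
  have tt0 : t - t' != 0 by rewrite subr_eq0.
  have [x [dx px]] := exists_dom Hre tt0.
  exists x; split=> //; apply: contra px => /eqP E1.
  rewrite pairingDl pairingNl; apply/eqP; apply: qqX_eq1.
  have hne : qq ^ pairing t' x != 0 := expfz_neq0 _ qn.
  rewrite /chi in E1; by rewrite (expfzDr _ _ qn) -invr_expz E1 (mulfV hne).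
have {}E := E Hd.
have HY : forall x, dominant av x -> in_image iota (\sum_(t <- enum_fset (finsupp a)) chi t x *: a' t).
  move=> x dx; have := Hphi x dx; rewrite /phi_q.
  suff -> : \sum_(beta0 <- finsupp a) qq ^ pairing beta0 (x + rho Lam) *: a beta0 =
     \sum_(t <- enum_fset (finsupp a)) chi t x *: a' t by [].
  by apply: eq_bigr => t _; rewrite /chi /a' scalerA pairingDr (expfzDr _ _ qn).
have {}E := E HY beta bs.
have -> : a beta = (qq ^ pairing beta (rho Lam))^-1 *: a' beta.
  by rewrite /a' scalerA (mulVf (expfz_neq0 _ qn)) scale1r.
by case: (HV) => _ _ VZ; apply: (VZ).
Qed.



Lemma digits_inj (D : nat) r (f g : 'I_r -> nat) :
  (forall i, (f i < D)%N) -> (forall i, (g i < D)%N) ->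
  (\sum_(i < r) f i * D ^ i = \sum_(i < r) g i * D ^ i)%N -> forall i, f i = g i.
Proof.
elim: r f g => [|r IH] f g hf hg; first by move=> _ [].
have D0 : (0 < D)%N := leq_ltn_trans (leq0n _) (hf ord0).
have E (h : 'I_r.+1 -> nat) : (\sum_(i < r) h (lift ord0 i) * D ^ (bump 0 i) =
     D * \sum_(i < r) h (lift ord0 i) * D ^ i)%N.
  rewrite big_distrr /=; apply: eq_bigr => i _.
  by rewrite /bump /= add1n expnS mulnCA.
rewrite !big_ord_recl /= !expn0 !muln1 !E => H.
have h0 : f ord0 = g ord0.
  move: (congr1 (modn^~ D) H).
  by rewrite ![(_ + D * _)%N]addnC ![(D * _)%N]mulnC !modnMDl !modn_small.
have H1 : (\sum_(i < r) f (lift ord0 i) * D ^ i = \sum_(i < r) g (lift ord0 i) * D ^ i)%N.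
  move: (congr1 (divn^~ D) H).
  rewrite ![(_ + D * _)%N]addnC ![(D * _)%N]mulnC !divnMDl // !divn_small //.
  by rewrite !addn0.
have := IH _ _ (fun i => hf (lift ord0 i)) (fun i => hg (lift ord0 i)) H1.
move=> Hl i; case: (unliftP ord0 i) => [j ->|->] //; exact: Hl.
Qed.

Lemma poly_roots0 (K : fieldType) (p : {poly K}) (z : K) :
  (forall i j : nat, (i%:R : K) = j%:R -> i = j) ->
  (forall k : nat, p.[z + k%:R] = 0) -> p = 0.
Proof.
move=> Hc Hr; apply/eqP; apply: contraT => p0.
pose rs := [seq z + k%:R | k <- iota 0 (size p)].
have := max_poly_roots p0 (rs := rs).
rewrite size_map size_iota ltnn; apply.
  by apply/allP => x /mapP[k _ ->]; rewrite /root Hr.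
rewrite map_inj_uniq ?iota_uniq // => i j /addrI; exact: Hc.
Qed.

Lemma Cfield_char (i j : nat) : (i%:R : Cfield) = j%:R -> i = j.
Proof. by move/eqP; rewrite /Cfield eqr_nat => /eqP. Qed.



Module KMh.
Import mpoly.
Lemma stepA n r (A : 'M[int]_n) (av al Lam : 'I_n -> 'rV[int]_r)
  (Hre : realization A av al Lam) (s : seq (mpoly.multinom r))
  (c : mpoly.multinom r -> Cfield) :
  (forall lam, dominant av lam -> \sum_(m <- s) c m *
     \prod_(i < r) (((lam + rho Lam) 0 i)%:~R : Cfield) ^+ mpoly.fun_of_multinom m i = 0) ->
  forall y : 'rV[int]_r,
    \sum_(m <- s) c m * \prod_(i < r) ((y 0 i)%:~R : Cfield) ^+ mpoly.fun_of_multinom m i = 0.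
Proof.
move=> H y.
pose p : {poly Cfield} := \sum_(m <- s) c m *: \prod_(i < r)
   (((y 0 i)%:~R)%:P + ((rho Lam) 0 i)%:~R *: 'X) ^+ mpoly.fun_of_multinom m i.
have ev x : p.[x] = \sum_(m <- s) c m *
   \prod_(i < r) ((y 0 i)%:~R + (rho Lam 0 i)%:~R * x) ^+ mpoly.fun_of_multinom m i.
  rewrite /p horner_sum; apply: eq_bigr => m _.
  rewrite hornerZ horner_prod; congr (_ * _); apply: eq_bigr => i _.
  by rewrite horner_exp hornerD hornerC hornerZ hornerX.
have p0 : p = 0.
  apply: (@poly_roots0 _ p ((shiftc av y).+1)%:R Cfield_char) => k.
  rewrite ev -[RHS](H _ (dominant_shift Hre y k)); apply: eq_bigr => m _.
  congr (_ * _); apply: eq_bigr => i _; congr (_ ^+ _).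
  rewrite !mxE !intrD intrM -pmulrn mulrSr !natrD.
  move: ((y 0 i)%:~R) ((rho Lam 0 i)%:~R) ((shiftc av y)%:R) (k%:R) => u v w z; ring.
have := ev 0; rewrite p0 horner0 => E; rewrite [RHS]E.
by apply: eq_bigr => m _; congr (_ * _); apply: eq_bigr => i _; rewrite mulr0 addr0.
Qed.

Lemma stepB r (s : seq (mpoly.multinom r)) (c : mpoly.multinom r -> Cfield) :
  uniq s ->
  (forall y : 'rV[int]_r,
    \sum_(m <- s) c m * \prod_(i < r) ((y 0 i)%:~R : Cfield) ^+ mpoly.fun_of_multinom m i = 0) ->
  forall m, m \in s -> c m = 0.
Proof.
move=> us H m0 m0s.
pose D := (\sum_(m <- s) \sum_(i < r) mpoly.fun_of_multinom m i).+1.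
have bd : forall m, m \in s -> forall i, (mpoly.fun_of_multinom m i < D)%N.
  move=> m ms i; rewrite ltnS (big_rem m ms) /=.
  apply: leq_trans (leq_addr _ _); rewrite (bigD1 i) //=; exact: leq_addr.
pose e (m : mpoly.multinom r) := (\sum_(i < r) mpoly.fun_of_multinom m i * D ^ i)%N.
pose q : {poly Cfield} := \sum_(m <- s) c m *: 'X^(e m).
have q0 : q = 0.
  apply: (@poly_roots0 _ q 0 Cfield_char) => N; rewrite add0r.
  rewrite horner_sum -[RHS](H (\row_i ((N ^ (D ^ i))%N)%:Z)).
  apply: eq_bigr => m _; rewrite hornerZ hornerXn; congr (_ * _).
  rewrite /e -prodrXr; apply: eq_bigr => i _.
  by rewrite mxE -pmulrn natrX -exprM mulnC.
have := congr1 (fun p : {poly Cfield} => p`_(e m0)) q0; rewrite coef0 /q coef_sum.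
rewrite (bigD1_seq m0) //= coefZ coefXn eqxx mulr1 big1_seq ?addr0 //.
move=> m /andP[mm0 ms]; rewrite coefZ coefXn.
have -> : (e m0 == e m) = false.
  apply/negbTE; apply: contra mm0 => /eqP E; apply/eqP/mpoly.mnmP => i.
  by apply/esym; exact: (@digits_inj D r (fun i => m0 i) (fun i => m i) (bd m0 m0s) (bd m ms) E i).
by rewrite mulr0.
Qed.

Lemma km_case n r (A : 'M[int]_n) (av al Lam : 'I_n -> 'rV[int]_r)
  (Hre : realization A av al Lam) (U L : algType Cfield) (iota : U -> L)
  (Hi : alg_hom iota) (a : mpoly.mpoly r L) :
  (forall lam : 'rV[int]_r, dominant av lam ->
          in_image iota (phi_KM (lam + rho Lam) a)) ->
  exists b : mpoly.mpoly r U, a = mpoly.map_mpoly iota b.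
Proof.
move=> Hphi.
have HV := img_subsp Hi.
have i0 : iota 0 = 0.
  case: Hi => HD _ _ _; have h := HD 0 0; rewrite addr0 in h.
  by apply: (addrI (iota 0)); rewrite -h addr0.
have phiE lam : phi_KM lam a = \sum_(m <- msupp a)
    (\prod_(i < r) ((lam 0 i)%:~R : Cfield) ^+ m i) *: a@_m.
  rewrite /phi_KM mevalE; apply: eq_bigr => m _.
  rewrite -mulr_algr; congr (_ * _).
  by rewrite -in_algE rmorph_prod; apply: eq_bigr => i _; rewrite rmorphXn rmorph_int.
have Hc : forall m, m \in msupp a -> in_image iota a@_m.
  apply: (@elim_lin Cfield L (in_image iota) HV _ _ (dominant av) (msupp a)
    (fun m lam => \prod_(i<r) (((lam + rho Lam) 0 i)%:~R : Cfield) ^+ m i)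
    (fun m => a@_m) (msupp_uniq a)).
  - move=> c Hc0; apply: (stepB (msupp_uniq a)); apply: (stepA Hre) => lam dl; exact: (Hc0 lam dl).
  - move=> x dx; rewrite -phiE; exact: Hphi.
have Hall : forall m, exists u, iota u == a@_m.
  move=> m; case: (boolP (m \in msupp a)) => ms.
    by have [u ->] := Hc m ms; exists u.
  by exists 0; rewrite i0 eq_sym mcoeff_eq0.
pose pre m := xchoose (Hall m).
have preP m : iota (pre m) = a@_m by apply/eqP; exact: (xchooseP (Hall m)).
pose b : {mpoly U[r]} := \sum_(m <- msupp a) pre m *: 'X_[m].
exists b.
have Hz : zmod_morphism iota.
  case: Hi => HD HZ _ _ x y; rewrite HD -scaleN1r HZ scaleN1r //.
pose iA : {additive U -> L} := HB.pack iota (GRing.isZmodMorphism.Build U L iota Hz).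
apply/mpolyP => m; rewrite (mcoeff_map_mpoly iA) /= /b raddf_sum /=.
under eq_bigr do rewrite mcoeffZ mcoeffX.
case: (boolP (m \in msupp a)) => ms.
  rewrite (bigD1_seq m) ?msupp_uniq //= eqxx mulr1 big1_seq ?addr0 ?preP //.
  by move=> m' /andP[/negbTE -> _]; rewrite mulr0.
rewrite big1_seq ?i0; first by apply/eqP; rewrite mcoeff_eq0.
move=> m' /andP[_ m's]; have -> : (m' == m) = false.
  by apply/negbTE; apply: contraNneq ms => <-.
by rewrite mulr0.
Qed.

End KMh.

Theorem mainTheorem7 (n : nat) (A : 'M[int]_n) (d : 'I_n -> nat) (r : nat)
    (av al Lam : 'I_n -> 'rV[int]_r)
    (HA : is_GCM A) (Hd : symmetrizer A d) (Hre : realization A av al Lam)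
    (i : 'I_n) :
  (* Kac--Moody case: U_- = U(n_-) over C *)
  (forall (U : algType Cfield) (f : 'I_n -> U)
          (L : algType Cfield) (iota : U -> L),
     presented_by_serre A (@fct_KM n) f ->
     ore_localization_at (f i) iota ->
     forall a : mpoly.mpoly r L,
       (forall lam : 'rV[int]_r, dominant av lam ->
          in_image iota (phi_KM (lam + rho Lam) a)) ->
       exists b : mpoly.mpoly r U, a = mpoly.map_mpoly iota b)
  /\
  (* q-difference case: U_- = U_q(n_-) over C(q) *)
  (forall (U : algType Cq) (f : 'I_n -> U)
          (L : algType Cq) (iota : U -> L),
     presented_by_serre A (fct_q d) f ->
     ore_localization_at (f i) iota ->
     forall a : pa_q L r,
       (forall lam : 'rV[int]_r, dominant av lam ->
          in_image iota (phi_q (lam + rho Lam) a)) ->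
       forall beta : 'rV[int]_r, in_image iota (a beta)).
Proof.
split.
- move=> U f L iota _ [Hi _ _ _] a Hphi; exact: (KMh.km_case Hre Hi Hphi).
- move=> U f L iota _ [Hi _ _ _] a Hphi; exact: (q_case Hre Hi Hphi).
Qed.
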